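(* Let $G$ be a compact group with Haar probability measure $dg$, acting linearly and continuously (i.e. via a continuous homomorphism $G\to GL(V)$) on a finite-dimensional real vector space $V$. Fix a vector $v\in V$ and a linear function $\ell:V\to\mathbb{R}$, and define $f:G\to\mathbb{R}$ by $f(g)=\ell(gv)$. Then $$\|f\|_2\le \|f\|_\infty\le \sqrt{\dim V}\,\|f\|_2 .$$
   Context: For a function $f:G\to\mathbb{R}$, $\|f\|_\infty=\max_{g\in G}|f(g)|$ and, for a positive integer $k$, $\|f\|_{2k}=\left(\int_G f^{2k}(g)\,dg\right)^{1/(2k)}$. *)

(* Defs.v *)
From HB Require Import structures.
From mathcomp Require Import all_boot all_order all_algebra.
From mathcomp Require Import all_classical all_reals all_analysis.
Set Implicit Arguments. Unset Strict Implicit. Unset Printing Implicit Defensive.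
Import Order.TTheory GRing.Theory Num.Theory.
Import numFieldNormedType.Exports.
Local Open Scope classical_set_scope.
Local Open Scope ring_scope.

Notation borel_of G := (g_sigma_algebraType (@open G)).

(* ||f||_oo = max_g |f g|, written as the supremum of the values |f g|
   (for continuous f on a compact space the sup is attained, i.e. a max). *)
Definition sup_norm {T : Type} {R : realType} (f : T -> R) : R :=
  sup [set `|f x| | x in [set: T]].

(* Main.v *)
Require Import Defs.
From HB Require Import structures.
From mathcomp Require Import all_boot all_order all_algebra.
From mathcomp Require Import all_classical all_reals all_analysis.
From mathcomp Require Import measurable_realfun.
From mathcomp Require Import ring lra.
Import Order.TTheory GRing.Theory Num.Theory.
Import numFieldNormedType.Exports.
Local Open Scope classical_set_scope.
Local Open Scope ring_scope.

Section LA.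
Context {R : realFieldType} {n : nat}.
Implicit Types (M : 'M[R]_n) (a b x : 'rV[R]_n).

Definition Bf M a b := (a *m M *m b^T) 0 0.

Lemma Bf_sym M a b : M^T = M -> Bf M b a = Bf M a b.
Proof.
move=> MT; rewrite /Bf [LHS](_ : _ = ((b *m M *m a^T)^T) 0 0); last by rewrite [RHS]mxE.
by rewrite !trmx_mul trmxK MT mulmxA.
Qed.

Lemma e_add (U V : 'M[R]_1) : (U + V) 0 0 = U 0 0 + V 0 0.
Proof. by rewrite mxE. Qed.
Lemma e_scale (c : R) (U : 'M[R]_1) : (c *: U) 0 0 = c * U 0 0.
Proof. by rewrite mxE. Qed.

Lemma Bf_addl M x y z : Bf M (x + y) z = Bf M x z + Bf M y z.
Proof. by rewrite /Bf !mulmxDl e_add. Qed.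
Lemma Bf_addr M x y z : Bf M z (x + y) = Bf M z x + Bf M z y.
Proof. by rewrite /Bf linearD /= mulmxDr e_add. Qed.
Lemma Bf_scalel M c x z : Bf M (c *: x) z = c * Bf M x z.
Proof. by rewrite /Bf -!scalemxAl e_scale. Qed.
Lemma Bf_scaler M c x z : Bf M z (c *: x) = c * Bf M z x.
Proof. by rewrite /Bf linearZ /= -scalemxAr e_scale. Qed.

Lemma Bf_quad M a b t : M^T = M ->
  Bf M (a + t *: b) (a + t *: b) = Bf M a a + 2 * t * Bf M a b + t ^+ 2 * Bf M b b.
Proof.
move=> MT.
rewrite !(Bf_addl, Bf_addr, Bf_scalel, Bf_scaler) (@Bf_sym M a b MT); ring.
Qed.

Lemma cs_form M a b : M^T = M -> (forall x, 0 <= Bf M x x) ->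
  (Bf M a b) ^+ 2 <= Bf M a a * Bf M b b.
Proof.
move=> MT psd.
set p := Bf M a a; set q := Bf M a b; set r := Bf M b b.
have Q t : 0 <= p + 2 * t * q + t ^+ 2 * r by rewrite -Bf_quad //.
have r0 : 0 <= r by exact: psd.
have [rz|rp] := eqVneq r 0.
  have [qz|qn] := eqVneq q 0.
    by rewrite qz rz expr0n /= mulr0.
  have := Q (- (p + 1) / (2 * q)).
  rewrite rz mulr0 addr0.
  have -> : 2 * (- (p + 1) / (2 * q)) * q = - (p + 1).
    by field.
  lra.
have rpos : 0 < r by rewrite lt_def rp r0.
have := Q (- q / r).
have -> : p + 2 * (- q / r) * q + (- q / r) ^+ 2 * r = (p * r - q ^+ 2) / r.
  by field.
rewrite pmulr_lge0 ?invr_gt0 //; lra.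
Qed.

Lemma pd_unit M : (forall x, x != 0 -> 0 < Bf M x x) -> M \in unitmx.
Proof.
move=> pd; rewrite unitmxE unitfE; apply/negP => /det0P [x x0 xM0].
by have := pd x x0; rewrite /Bf xM0 mul0mx mxE ltxx.
Qed.
End LA.

Section S.
Context (R : realType) (G : ptopologicalType) (G_compact : compact [set: G]).
Context (mu : probability (borel_of G) R).

Lemma cont_meas (F : G -> R) : continuous F -> measurable_fun [set: borel_of G] F.
Proof.
move=> /continuousP cF.
apply: (measurability _ (RGenOpens.measurableE R)).
move=> _ [_ [a [b ->] <-]].
apply: measurableI => //.
apply: sub_sigma_algebra.
exact/cF/interval_open.
Qed.

Lemma ct_bnd (F : G -> R) : continuous F -> [bounded F x | x in [set: G]].
Proof.
move=> cF.
have := compact_bounded (continuous_compact (continuous_subspaceT cF) G_compact).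
rewrite /bounded_near.
move=> /= H; apply: filterS H => M HM x _; apply: HM; by exists x.
Qed.



Lemma ct_int (F : G -> R) : continuous F -> mu.-integrable [set: borel_of G] (EFin \o F).
Proof.
move=> cF; apply: measurable_bounded_integrable => //.
  by apply: (le_lt_trans (probability_le1 mu _)); rewrite ?ltry.
  exact: cont_meas.
exact: ct_bnd.
Qed.



Lemma ct_sum (I : Type) (r : seq I) (F : I -> G -> R) :
  (forall i, continuous (F i)) -> continuous (fun g => \sum_(i <- r) F i g).
Proof.
move=> cF; elim: r => [|a r IH].
  under eq_fun do rewrite big_nil; exact: cst_continuous.
under eq_fun do rewrite big_cons.
by move=> x; apply: continuousD; [exact: cF | exact: IH].
Qed.

Lemma ct_mul (F1 F2 : G -> R) : continuous F1 -> continuous F2 ->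
  continuous (fun g => F1 g * F2 g).
Proof. by move=> c1 c2 x; apply: continuousM; [exact: c1|exact: c2]. Qed.

Lemma int_sum (I : Type) (r : seq I) (F : I -> G -> R) :
  (forall i, continuous (F i)) ->
  \int[mu]_x (\sum_(i <- r) F i x) = \sum_(i <- r) \int[mu]_x F i x.
Proof.
move=> cF; elim: r => [|a r IH].
  under eq_Rintegral do rewrite big_nil.
  by rewrite big_nil Rintegral_cst // mul0r.
under eq_Rintegral do rewrite big_cons.
rewrite big_cons -IH RintegralD //.
- exact/ct_int/cF.
- exact/ct_int/ct_sum.
Qed.

Lemma int_cst (c : R) : \int[mu]_x c = c.
Proof.
rewrite Rintegral_cst //.
rewrite (_ : fine _ = 1) ?mulr1 //; exact: (congr1 fine (probability_setT mu)).
Qed.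


Lemma int_pos (F : G -> R) : continuous F -> (forall x, 0 < F x) ->
  0 < \int[mu]_x F x.
Proof.
move=> cF Fpos.
have ge0 : 0 <= \int[mu]_x F x by apply: Rintegral_ge0 => x _; exact/ltW.
rewrite lt_def ge0 andbT; apply/eqP => I0.
have iF := @ct_int F cF.
have fin := integrable_fin_num (measurableT : measurable [set: borel_of G]) iF.
have E0 : (\int[mu]_(x in [set: borel_of G]) `|(EFin \o F) x|)%E = 0%E.
  rewrite (eq_integral (fun x : borel_of G => (F x)%:E)); last first.
    by move=> x _ /=; rewrite ger0_norm //; exact/ltW.
  by rewrite -(fineK fin) -/(Rintegral _ _ _) I0.
have mF : measurable_fun [set: borel_of G] (EFin \o F).
  by apply/measurable_EFinP; exact: (@cont_meas F cF).
have := (ae_eq_integral_abs mu measurableT mF).1 E0.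
case=> N [mN muN sub].
have : (mu [set: borel_of G] <= mu N)%E.
  apply: le_measure; rewrite ?inE //.
  move=> x _; apply: sub => /= /(_ I) /= [] /eqP.
  by rewrite gt_eqF.
rewrite muN.
have -> : mu [set: borel_of G] = 1%E by exact: probability_setT.
by rewrite lee_fin ler10.
Qed.

Context (mul : G -> G -> G) (inv : G -> G) (e : G)
  (mulA : associative mul) (mul1g : left_id e mul)
  (mulVg : forall x, mul (inv x) x = e)
  (mul_cont : continuous (fun p : G * G => mul p.1 p.2))
  (mu_haar : forall (g : G) (A : set (borel_of G)),
      measurable A -> mu [set mul g x | x in A] = mu A).

Lemma mulgV x : mul x (inv x) = e.
Proof.
set y := mul x (inv x).
have yy : mul y y = y by rewrite /y -mulA (mulA (inv x)) mulVg mul1g.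
by rewrite -[y]mul1g -(mulVg y) -mulA yy.
Qed.

Lemma mulL_cont h : continuous (mul h).
Proof.
move=> x.
have -> : mul h = (fun p : G * G => mul p.1 p.2) \o (fun x => (h, x)) by [].
apply: continuous_comp; last exact: mul_cont.
apply: cvg_pair; [exact: cvg_cst | exact: cvg_id].
Qed.

Lemma cont_meas2 (F : G -> G) : continuous F -> measurable_fun [set: borel_of G] (F : borel_of G -> borel_of G).
Proof.
move=> /continuousP cF.
apply: (@measurability _ _ (borel_of G) (borel_of G) _ _ (@open G)).
 reflexivity.
move=> _ [A oA <-].
apply: measurableI => //.
apply: sub_sigma_algebra.
exact/cF.
Qed.

Lemma inv_int (h : G) (F : G -> R) : continuous F ->
  \int[mu]_x F (mul h x) = \int[mu]_x F x.
Proof.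
move=> cF.
have mL : measurable_fun [set: borel_of G] (mul h : borel_of G -> borel_of G).
  exact: (@cont_meas2 (mul h) (mulL_cont h)).
rewrite /Rintegral; congr fine.
rewrite [RHS](eq_measure_integral (pushforward mu (mul h : borel_of G -> borel_of G))); last first.
  move=> A mA _; rewrite /pushforward.
  etransitivity; first exact: (esym (mu_haar (inv h) A mA)).
  congr (mu _).
  apply/seteqP; split => x /=.
    by move=> [y Ay <-]; rewrite mulA mulgV mul1g.
  move=> Ax; exists (mul h x) => //; by rewrite mulA mulVg mul1g.
rewrite integral_pushforward //.
- by apply/measurable_EFinP; exact: (@cont_meas F cF).
- apply: (@ct_int (fun x => F (mul h x))).
  move=> x; apply: continuous_comp; [exact: mulL_cont | exact: cF].
Qed.

Definition ctm p q (X : G -> 'M[R]_(p, q)) := forall i j, continuous (fun g => X g i j).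
Definition MI p q (X : G -> 'M[R]_(p, q)) : 'M[R]_(p, q) :=
  \matrix_(i, j) \int[mu]_x X x i j.
Arguments ctm {p q}.
Arguments MI {p q}.

Lemma ctm_cst p q (A : 'M[R]_(p, q)) : ctm (fun _ => A).
Proof. by move=> i j; exact: cst_continuous. Qed.

Lemma ctm_mul p q r (X : G -> 'M[R]_(p, q)) (Y : G -> 'M[R]_(q, r)) :
  ctm X -> ctm Y -> ctm (fun g => X g *m Y g).
Proof.
move=> cX cY i j.
have -> : (fun g => (X g *m Y g) i j) = (fun g => \sum_k X g i k * Y g k j).
  by apply: funext => g; rewrite mxE.
by apply: ct_sum => k; apply: ct_mul; [exact: cX | exact: cY].
Qed.

Lemma ctm_tr p q (X : G -> 'M[R]_(p, q)) : ctm X -> ctm (fun g => (X g)^T).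
Proof.
move=> cX i j.
have -> : (fun g => ((X g)^T) i j) = (fun g => X g j i).
  by apply: funext => g; rewrite mxE.
exact: cX.
Qed.

Lemma MI_mull m p q (A : 'M[R]_(m, p)) (X : G -> 'M[R]_(p, q)) :
  ctm X -> A *m MI X = MI (fun g => A *m X g).
Proof.
move=> cX; apply/matrixP => i j.
rewrite [LHS]mxE [RHS]mxE.
under [RHS]eq_Rintegral do rewrite mxE.
rewrite int_sum; last by move=> k; apply: ct_mul; [exact: cst_continuous | exact: cX].
apply: eq_bigr => k _; rewrite /MI mxE RintegralZl //; exact/ct_int/cX.
Qed.
Lemma MI_mulr m p q (X : G -> 'M[R]_(m, p)) (B : 'M[R]_(p, q)) :
  ctm X -> MI X *m B = MI (fun g => X g *m B).
Proof.
move=> cX; apply/matrixP => i j.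
rewrite [LHS]mxE [RHS]mxE.
under [RHS]eq_Rintegral do rewrite mxE.
rewrite int_sum; last by move=> k; apply: ct_mul; [exact: cX | exact: cst_continuous].
apply: eq_bigr => k _; rewrite /MI mxE.
under [RHS]eq_Rintegral do rewrite mulrC.
rewrite RintegralZl; [by rewrite mulrC | by [] | exact/ct_int/cX].
Qed.

Lemma MI_tr p q (X : G -> 'M[R]_(p, q)) : (MI X)^T = MI (fun g => (X g)^T).
Proof.
apply/matrixP => i j; rewrite [LHS]mxE /MI [LHS]mxE [RHS]mxE.
by under [RHS]eq_Rintegral do rewrite mxE.
Qed.

Lemma MI_cst p q (A : 'M[R]_(p, q)) : MI (fun _ => A) = A.
Proof. by apply/matrixP => i j; rewrite /MI [LHS]mxE int_cst. Qed.

Lemma MI_trace p (X : G -> 'M[R]_p) : ctm X -> \tr (MI X) = \int[mu]_x \tr (X x).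
Proof.
move=> cX; rewrite /mxtrace int_sum; last by move=> k; exact: cX.
by apply: eq_bigr => k _; rewrite /MI mxE.
Qed.

Lemma MI_inv h p q (X : G -> 'M[R]_(p, q)) : ctm X ->
  MI (fun g => X (mul h g)) = MI X.
Proof.
move=> cX; apply/matrixP => i j; rewrite /MI [LHS]mxE [RHS]mxE.
exact: (@inv_int h (fun g => X g i j) (cX i j)).
Qed.

Context (n : nat) (rho : G -> 'M[R]_n)
  (rho_mul : forall a b, rho (mul a b) = rho a *m rho b)
  (rho_e : rho e = 1%:M)
  (rho_cont : continuous rho)
  (v : 'cV[R]_n).

Arguments ctm_cst {p q}.
Arguments ctm_mul {p q r X Y}.
Arguments ctm_tr {p q X}.
Arguments MI_mull {m p q} A {X}.
Arguments MI_mulr {m p q X} B.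
Arguments MI_tr {p q}.
Arguments MI_cst {p q}.
Arguments MI_trace {p X}.
Arguments MI_inv h {p q X}.

Lemma ctm_rho : ctm rho.
Proof.
move=> i j x.
have -> : (fun g => rho g i j) = (fun M : 'M[R]_n => M i j) \o rho by [].
apply: continuous_comp; first exact: rho_cont.
exact: (@coord_continuous _ n n i j (rho x)).
Qed.

Lemma rho_invr g : rho g *m rho (inv g) = 1%:M.
Proof. by rewrite -rho_mul mulgV rho_e. Qed.

Lemma rho_invl g : rho (inv g) *m rho g = 1%:M.
Proof. by rewrite -rho_mul mulVg rho_e. Qed.

Lemma sq_ge0 p (y : 'rV[R]_p) : 0 <= (y *m y^T) 0 0.
Proof. by rewrite mxE; apply: sumr_ge0 => i _; rewrite mxE -expr2 sqr_ge0. Qed.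

Lemma sq_gt0 p (y : 'rV[R]_p) : y != 0 -> 0 < (y *m y^T) 0 0.
Proof.
move=> y0; rewrite lt_def sq_ge0 andbT; apply: contra y0 => /eqP H.
apply/eqP/matrixP => i j; rewrite (ord1 i) mxE.
move: H; rewrite mxE => /eqP; rewrite psumr_eq0; last first.
  by move=> k _; rewrite mxE -expr2 sqr_ge0.
move=> /allP /(_ j (mem_index_enum j)) /=; rewrite mxE -expr2 sqrf_eq0.
by move/eqP.
Qed.


Section Core.
Variable eps : R.
Hypothesis eps0 : 0 < eps.

Definition Smx : 'M[R]_n := v *m v^T + eps%:M.
Definition W g := rho g *m Smx *m (rho g)^T.
Definition Mm := MI W.
Definition Pm := invmx Mm.

Lemma ctm_W : ctm W.
Proof. exact: (ctm_mul (ctm_mul ctm_rho (ctm_cst Smx)) (ctm_tr ctm_rho)). Qed.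

Lemma ctm_xW (x : 'rV[R]_n) : ctm (fun g => x *m W g *m x^T).
Proof. exact: (ctm_mul (ctm_mul (ctm_cst x) ctm_W) (ctm_cst _)). Qed.

Lemma S_sym : Smx^T = Smx.
Proof. by rewrite /Smx linearD /= trmx_mul trmxK tr_scalar_mx. Qed.

Lemma M_sym : Mm^T = Mm.
Proof.
rewrite /Mm MI_tr; congr MI; apply: funext => g.
by rewrite /W !trmx_mul trmxK S_sym mulmxA.
Qed.

Lemma e11 (a b : 'M[R]_1) : (a *m b) 0 0 = a 0 0 * b 0 0.
Proof. by rewrite mxE big_ord1. Qed.

Lemma Bf_W x g : Bf (W g) x x =
  ((x *m rho g *m v) 0 0) ^+ 2 + eps * ((x *m rho g) *m (x *m rho g)^T) 0 0.
Proof.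
rewrite /Bf /W.
have -> : x *m (rho g *m Smx *m (rho g)^T) *m x^T
        = (x *m rho g) *m Smx *m (x *m rho g)^T by rewrite trmx_mul !mulmxA.
set y := x *m rho g.
rewrite /Smx mulmxDr mulmxDl mul_mx_scalar -scalemxAl e_add e_scale.
rewrite !mulmxA -(mulmxA (y *m v)) -trmx_mul e11 expr2.
by rewrite [X in _ * X + _ = _]mxE.
Qed.

Lemma Bf_W_ge x g : eps * ((x *m rho g) *m (x *m rho g)^T) 0 0 <= Bf (W g) x x.
Proof. by rewrite Bf_W lerDr sqr_ge0. Qed.

Lemma BfM x : Bf Mm x x = \int[mu]_g Bf (W g) x x.
Proof.
rewrite /Bf /Mm (MI_mull _ ctm_W) (MI_mulr _ (ctm_mul (ctm_cst x) ctm_W)).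
by rewrite /MI mxE.
Qed.

Lemma M_psd x : 0 <= Bf Mm x x.
Proof.
rewrite BfM; apply: Rintegral_ge0 => g _.
apply: le_trans (Bf_W_ge x g); apply: mulr_ge0; [exact: ltW | exact: sq_ge0].
Qed.

Lemma M_pd x : x != 0 -> 0 < Bf Mm x x.
Proof.
move=> x0; rewrite BfM; apply: int_pos.
  exact: (ctm_xW x 0 0).
move=> g; apply: lt_le_trans (Bf_W_ge x g); apply: mulr_gt0 => //.
apply: sq_gt0; apply: contra x0 => /eqP H.
by rewrite -(mulmx1 x) -(rho_invr g) mulmxA H mul0mx.
Qed.

Lemma M_unit : Mm \in unitmx.
Proof. exact: pd_unit M_pd. Qed.

Lemma M_inv h : rho h *m Mm *m (rho h)^T = Mm.
Proof.
rewrite /Mm (MI_mull _ ctm_W) (MI_mulr _ (ctm_mul (ctm_cst _) ctm_W)).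
rewrite -(MI_inv h ctm_W); congr MI; apply: funext => g.
by rewrite /W rho_mul trmx_mul !mulmxA.
Qed.

Lemma P_sym : Pm^T = Pm.
Proof. by rewrite /Pm trmx_inv M_sym. Qed.

Lemma MP : Mm *m Pm = 1%:M.
Proof. exact: mulmxV M_unit. Qed.

Lemma PM : Pm *m Mm = 1%:M.
Proof. exact: mulVmx M_unit. Qed.

Lemma P_inv h : (rho h)^T *m Pm *m rho h = Pm.
Proof.
set Q := (rho h)^T *m Pm *m rho h.
have QM : Q *m Mm = 1%:M.
  rewrite -(M_inv (inv h)) /Q !mulmxA -(mulmxA _ (rho h)) rho_invr mulmx1.
  rewrite -(mulmxA _ Pm) PM mulmx1 -trmx_mul rho_invl.
  by rewrite tr_scalar_mx.
by rewrite -[Q]mulmx1 -MP mulmxA QM mul1mx.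
Qed.


Lemma tr_PS : \tr (Pm *m Smx) = n%:R.
Proof.
have : \tr (Pm *m Mm) = n%:R by rewrite PM mxtrace1.
rewrite /Mm (MI_mull Pm ctm_W) (MI_trace (ctm_mul (ctm_cst Pm) ctm_W)).
under eq_Rintegral => g _.
  rewrite /W !mulmxA mxtrace_mulC !mulmxA (P_inv g).
  over.
by rewrite int_cst.
Qed.

Lemma trP_ge0 : 0 <= \tr Pm.
Proof.
apply: sumr_ge0 => i _.
have -> : Pm i i = Bf Mm (row i Pm) (row i Pm).
  rewrite /Bf -row_mul PM.
  by rewrite [row i 1%:M]rowE mulmx1 -rowE !mxE.
exact: M_psd.
Qed.


Lemma tr11 (a : 'M[R]_1) : \tr a = a 0 0.
Proof. by rewrite /mxtrace big_ord1. Qed.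

Lemma vPv_le : Bf Pm v^T v^T <= n%:R.
Proof.
have := tr_PS.
rewrite /Smx mulmxDr mxtraceD mul_mx_scalar mxtraceZ mulmxA mxtrace_mulC tr11.
rewrite /Bf trmxK mulmxA => E.
have := trP_ge0; have := eps0.
rewrite -E; move: (\tr Pm) ((v^T *m Pm *m v) 0 0) => t z; nra.
Qed.

Lemma key (l : 'rV[R]_n) h : ((l *m (rho h *m v)) 0 0) ^+ 2 <= n%:R * Bf Mm l l.
Proof.
set w := rho h *m v; set b := w^T *m Pm.
have E1 : Bf Mm l b = (l *m w) 0 0.
  rewrite /Bf /b trmx_mul trmxK P_sym !mulmxA.
  by rewrite -(mulmxA l Mm Pm) MP mulmx1.
have E2 : Bf Mm b b = Bf Pm v^T v^T.
  rewrite /Bf /b /w !trmx_mul !trmxK P_sym !mulmxA.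
  rewrite -(mulmxA _ Mm Pm) MP mulmx1.
  rewrite -(mulmxA v^T (rho h)^T Pm) -(mulmxA v^T ((rho h)^T *m Pm) (rho h)) P_inv.
  by [].
have := cs_form Mm l b M_sym M_psd.
rewrite E1 E2 => H; apply: (le_trans H).
rewrite mulrC; apply: ler_wpM2r; [exact: M_psd | exact: vPv_le].
Qed.


Lemma BfMl (l : 'rV[R]_n) : Bf Mm l l =
  \int[mu]_g ((l *m rho g *m v) 0 0) ^+ 2 +
  eps * \int[mu]_g ((l *m rho g) *m (l *m rho g)^T) 0 0.
Proof.
have c1 : continuous (fun g => ((l *m rho g *m v) 0 0) ^+ 2).
  under eq_fun do rewrite expr2.
  apply: ct_mul; exact: (ctm_mul (ctm_mul (ctm_cst l) ctm_rho) (ctm_cst v) 0 0).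
have c2 : continuous (fun g => ((l *m rho g) *m (l *m rho g)^T) 0 0).
  exact: (ctm_mul (ctm_mul (ctm_cst l) ctm_rho) (ctm_tr (ctm_mul (ctm_cst l) ctm_rho)) 0 0).
rewrite BfM.
under eq_Rintegral do rewrite Bf_W.
rewrite RintegralD //.
- rewrite RintegralZl //; exact: (@ct_int _ c2).
- exact: (@ct_int _ c1).
- apply: (@ct_int (fun g => eps * ((l *m rho g) *m (l *m rho g)^T) 0 0)).
  by apply: ct_mul => //; exact: cst_continuous.
Qed.
End Core.

Lemma bound (l : 'rV[R]_n) h :
  ((l *m (rho h *m v)) 0 0) ^+ 2 <= n%:R * \int[mu]_g ((l *m rho g *m v) 0 0) ^+ 2.
Proof.
set I2 := \int[mu]_g _.
set C := \int[mu]_g ((l *m rho g) *m (l *m rho g)^T) 0 0.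
have C0 : 0 <= C by apply: Rintegral_ge0 => g _; exact: sq_ge0.
apply/ler_addgt0Pr => d d0.
set k := n%:R * C + 1.
have k0 : 0 < k by rewrite /k ltr_pwDr // mulr_ge0.
have e0 : 0 < d / k by rewrite divr_gt0.
have := @key (d / k) e0 l h; rewrite (BfMl (d / k)) -/I2 -/C => H; apply: (le_trans H).
rewrite mulrDr lerD2l.
have -> : n%:R * (d / k * C) = d * ((n%:R * C) / k) by ring.
rewrite ger_pMr // ler_pdivrMr // /k; lra.
Qed.

Lemma main (l : 'rV[R]_n) :
  let f : borel_of G -> R := fun g => (l *m (rho g *m v)) 0 0 in
  ('N[mu]_2[EFin \o f] <= (sup_norm f)%:E <=
     (Num.sqrt n%:R)%:E * 'N[mu]_2[EFin \o f])%E.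
Proof.
cbv zeta.
set f := (fun g : borel_of G => (l *m (rho g *m v)) 0 0).
have cf : continuous (f : G -> R).
  exact: (ctm_mul (ctm_cst l) (ctm_mul ctm_rho (ctm_cst v)) 0 0).
have cf2 : continuous (fun g : G => f g ^+ 2).
  by under eq_fun do rewrite expr2; exact: ct_mul.
set I2 := \int[mu]_g (f g) ^+ 2.
have I20 : 0 <= I2 by apply: Rintegral_ge0 => g _; exact: sqr_ge0.
have Nf : 'N[mu]_2[EFin \o f]%E = (Num.sqrt I2)%:E.
  rewrite unlock /=.
  under eq_integral => x _ do rewrite powR_mulrn // real_normK ?num_real //.
  have fin := integrable_fin_num (measurableT : measurable [set: borel_of G]) (@ct_int _ cf2).
  rewrite -(fineK fin) -/(Rintegral _ _ _) -/I2 poweR_EFin powR12_sqrt //.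
have B h : `|f h| <= Num.sqrt n%:R * Num.sqrt I2.
  have := bound l h; rewrite -sqrtrM // -sqrtr_sqr => H.
  rewrite ler_sqrt ?mulr_ge0 //; apply: (le_trans H).
  by under eq_Rintegral do rewrite -mulmxA.
set E := [set `|f x| | x in [set: G]].
have En : E !=set0 by exists `|f e|; exists e.
have Eub : ubound E (Num.sqrt n%:R * Num.sqrt I2) by move=> _ [x _ <-]; exact: B.
have Ehas : has_ubound E by exists (Num.sqrt n%:R * Num.sqrt I2).
have le1 x : `|f x| <= sup_norm f by apply: ub_le_sup => //; exists x.
have s0 : 0 <= sup_norm f by apply: le_trans (le1 e).
rewrite Nf !lee_fin; apply/andP; split.
  rewrite -(ger0_norm s0) -sqrtr_sqr ler_sqrt ?sqr_ge0 //.
  have -> : sup_norm f ^+ 2 = \int[mu]_g (sup_norm f ^+ 2) by rewrite int_cst.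
  apply: le_Rintegral => //.
  - exact: (@ct_int _ cf2).
  - apply: (@ct_int (fun _ => sup_norm f ^+ 2)); exact: cst_continuous.
  move=> x _; rewrite -[f x ^+ 2]real_normK ?num_real //.
  by rewrite ler_pXn2r ?nnegrE // le1.
exact: ge_sup.
Qed.
End S.

Theorem theorem1p2 (R : realType) (G : ptopologicalType)
  (mul : G -> G -> G) (inv : G -> G) (e : G)
  (mulA : associative mul) (mul1g : left_id e mul)
  (mulVg : forall x, mul (inv x) x = e)
  (mul_cont : continuous (fun p : G * G => mul p.1 p.2))
  (inv_cont : continuous inv)
  (G_hausdorff : hausdorff_space G) (G_compact : compact [set: G])
  (mu : probability (borel_of G) R)
  (mu_haar : forall (g : G) (A : set (borel_of G)),
      measurable A -> mu [set mul g x | x in A] = mu A)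
  (n : nat) (rho : G -> 'M[R]_n)
  (rho_mul : forall a b, rho (mul a b) = rho a *m rho b)
  (rho_e : rho e = 1%:M)
  (rho_cont : continuous rho)
  (v : 'cV[R]_n) (l : 'rV[R]_n) :
  let f : borel_of G -> R := fun g => (l *m (rho g *m v)) 0 0 in
  ('N[mu]_2[EFin \o f] <= (sup_norm f)%:E <=
     (Num.sqrt n%:R)%:E * 'N[mu]_2[EFin \o f])%E.
Proof.
exact: (@main R G G_compact mu mul inv e mulA mul1g mulVg mul_cont mu_haar n rho rho_mul rho_e rho_cont v l).
Qed.
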